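(* Let $S\subseteq\mathbb{R}^n$ be a closed set, $H$ an affine hyperplane, and $C\subseteq\mathbb{R}^n$ a convex $S$-free set. Assume $C=\{x\in\mathbb{R}^n : \alpha^\mathsf{T} x\le\beta\ \forall(\alpha,\beta)\in\Gamma\}$ for some family $\Gamma$ of inequalities, and that for every $(\alpha,\beta)\in\Gamma$ there is a point $x\in S\cap C\cap H$ that exposes $(\alpha,\beta)$ with respect to $C$. Then $C$ is maximal $S$-free with respect to $H$.
   Context: A convex set $C$ is $S$-free if $\operatorname{int}(C)\cap S=\emptyset$. Given an affine hyperplane $H$, a closed convex $C$ is $S$-free with respect to $H$ if the interior of $C\cap H$ relative to $H$ does not meet $S\cap H$; it is maximal $S$-free with respect to $H$ if for every closed convex $C'\supseteq C$ that is $S$-free with respect to $H$, $C'\cap H\subseteq C\cap H$. An inequality $\alpha^\mathsf{T} x\le\beta$ (written $(\alpha,\beta)$) is valid for $C$ if it holds on $C$; it is non-trivial if $\alpha\neq0$. A point $x_0$ exposes a valid inequality $(\alpha,\beta)$ with respect to convex $C$ if $\alpha^\mathsf{T} x_0=\beta$ and for every non-trivial valid inequality $\gamma^\mathsf{T} x\le\delta$ for $C$ with $\gamma^\mathsf{T} x_0=\delta$ there is $\mu>0$ with $\gamma=\mu\alpha$ and $\delta=\mu\beta$. *)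

(* Defs.v *)
From HB Require Import structures.
From mathcomp Require Import all_boot all_order all_algebra.
From mathcomp Require Import all_classical all_reals all_analysis.
Set Implicit Arguments. Unset Strict Implicit. Unset Printing Implicit Defensive.
Import Order.TTheory GRing.Theory Num.Theory.
Import numFieldNormedType.Exports.
Local Open Scope classical_set_scope.
Local Open Scope ring_scope.

Section Defs.
Variables (R : realType) (n : nat).
Local Notation V := 'rV[R]_n.

Definition dotp (a x : V) : R := \sum_(i < n) a 0 i * x 0 i.

(* the affine hyperplane {x | a^T x = b}, a hyperplane when a != 0 *)
Definition hyperplane (a : V) (b : R) : set V := [set x | dotp a x = b].

Definition convexR (C : set V) : Prop :=
  forall x y, C x -> C y -> forall t : R, 0 <= t -> t <= 1 ->
    C (t *: x + (1 - t) *: y).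

Definition S_free (S C : set V) : Prop := interior C `&` S = set0.

Definition rel_interior (H A : set V) : set V :=
  [set x | A x /\ H x /\ exists2 e : R, 0 < e &
     forall y, H y -> `|y - x| < e -> A y].

Definition S_free_wrt (S H C : set V) : Prop :=
  rel_interior H (C `&` H) `&` (S `&` H) = set0.

Definition maximal_S_free_wrt (S H C : set V) : Prop :=
  forall C' : set V, closed C' -> convexR C' -> C `<=` C' ->
    S_free_wrt S H C' -> C' `&` H `<=` C `&` H.

Definition valid_ineq (C : set V) (p : V * R) : Prop :=
  forall x, C x -> dotp p.1 x <= p.2.

Definition exposes (x0 : V) (p : V * R) (C : set V) : Prop :=
  dotp p.1 x0 = p.2 /\
  forall q : V * R, valid_ineq C q -> q.1 != 0 -> dotp q.1 x0 = q.2 ->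
    exists2 mu : R, 0 < mu & q.1 = mu *: p.1 /\ q.2 = mu * p.2.

End Defs.

(* Main.v *)
Require Import Defs.
From HB Require Import structures.
From mathcomp Require Import all_boot all_order all_algebra.
From mathcomp Require Import all_classical all_reals all_analysis.
From mathcomp Require Import ring lra.
Import Order.TTheory GRing.Theory Num.Theory.
Import numFieldNormedType.Exports.
Local Open Scope classical_set_scope.
Local Open Scope ring_scope.

Lemma dotpC {R : realType} {n : nat} (a b : 'rV[R]_n) : dotp a b = dotp b a.
Proof. by apply: eq_bigr => i _; rewrite mulrC. Qed.

Lemma dotpDr {R : realType} {n : nat} (a b c : 'rV[R]_n) : dotp a (b + c) = dotp a b + dotp a c.
Proof. by rewrite /dotp -big_split; apply: eq_bigr => i _; rewrite mxE mulrDr. Qed.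

Lemma dotpNr {R : realType} {n : nat} (a b : 'rV[R]_n) : dotp a (- b) = - dotp a b.
Proof. by rewrite /dotp -sumrN; apply: eq_bigr => i _; rewrite mxE mulrN. Qed.

Lemma dotpBr {R : realType} {n : nat} (a b c : 'rV[R]_n) : dotp a (b - c) = dotp a b - dotp a c.
Proof. by rewrite dotpDr dotpNr. Qed.

Lemma dotpZr {R : realType} {n : nat} (a b : 'rV[R]_n) k : dotp a (k *: b) = k * dotp a b.
Proof. by rewrite /dotp mulr_sumr; apply: eq_bigr => i _; rewrite mxE mulrCA. Qed.

Lemma dotpDl {R : realType} {n : nat} (a b c : 'rV[R]_n) : dotp (b + c) a = dotp b a + dotp c a.
Proof. by rewrite dotpC dotpDr !(dotpC a). Qed.

Lemma dotpBl {R : realType} {n : nat} (a b c : 'rV[R]_n) : dotp (b - c) a = dotp b a - dotp c a.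
Proof. by rewrite dotpC dotpBr !(dotpC a). Qed.

Lemma dotpZl {R : realType} {n : nat} (a b : 'rV[R]_n) k : dotp (k *: b) a = k * dotp b a.
Proof. by rewrite dotpC dotpZr dotpC. Qed.

Lemma dotp_ge0 {R : realType} {n : nat} (a : 'rV[R]_n) : 0 <= dotp a a.
Proof. by apply: sumr_ge0 => i _; rewrite -expr2 sqr_ge0. Qed.

Lemma dotp_term {R : realType} {n : nat} (a : 'rV[R]_n) i : a 0 i * a 0 i <= dotp a a.
Proof.
rewrite /dotp (bigD1 i) //= lerDl; apply: sumr_ge0 => j _; by rewrite -expr2 sqr_ge0.
Qed.

Lemma entry_le {R : realType} {n : nat} (v : 'rV[R]_n) i : `|v 0 i| <= `|v|.
Proof.
rewrite [leRHS]/Num.norm /= mx_normrE; apply/bigmax_geP; right => /=.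
by exists (0, i).
Qed.

Lemma dotp_bound {R : realType} {n : nat} (a b : 'rV[R]_n) :
  `|dotp a b| <= n%:R * (`|a| * `|b|).
Proof.
apply: (le_trans (ler_norm_sum _ _ _)).
have -> : n%:R * (`|a| * `|b|) = \sum_(i < n) (`|a| * `|b|).
  by rewrite sumr_const card_ord mulr_natl.
apply: ler_sum => i _; rewrite normrM.
by apply: ler_pM => //; apply: entry_le.
Qed.

Lemma sqd_continuous (R : realType) n (z : 'rV[R]_n) :
  continuous (fun v : 'rV[R]_n => dotp (z - v) (z - v)).
Proof.
rewrite /dotp.
apply: continuous_big; first exact: add_continuous.
move=> i _ v.
have h : {for v, continuous (fun v : 'rV[R]_n => (z - v) 0 i)}.
  have h1 : {for v, continuous (fun v : 'rV[R]_n => z - v)}.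
    by apply: continuousB; [exact: cst_continuous | exact: cvg_id].
  exact: (continuous_comp h1 (@coord_continuous R 1 n 0 i (z - v))).
exact: continuousM.
Qed.

Lemma nearest (R : realType) n (K : set 'rV[R]_n) x z : closed K -> K x ->
  exists2 p, K p & forall w, K w -> dotp (z - p) (z - p) <= dotp (z - w) (z - w).
Proof.
move=> cK Kx.
set r := 1 + dotp (z - x) (z - x).
have d0 := dotp_ge0 (z - x).
have r1 : 1 <= r by rewrite /r lerDl.
pose Box := [set v : 'rV[R]_n | forall i, `[z 0 i - r, z 0 i + r]%classic (v ord0 i)].
have cB : compact Box.
  by apply: (@rV_compact _ _ (fun i => `[z 0 i - r, z 0 i + r]%classic)) => i; exact: segment_compact.
have cA : compact (Box `&` K) by apply: compact_closedI.
have inBox v : dotp (z - v) (z - v) < r * r -> Box v.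
  move=> hv i; rewrite /= in_itv /=; have := dotp_term (z - v) i; rewrite !mxE => h.
  apply/andP; split; nra.
have Ax : (Box `&` K) x by split => //; apply: inBox; rewrite /r; nra.
have cf : {within Box `&` K, continuous (fun v : 'rV[R]_n => dotp (z - v) (z - v))}.
  by apply: continuous_subspaceT; exact: sqd_continuous.
have [c cA' cmin] := EVT_min_rV (ex_intro _ x Ax) cA cf.
rewrite inE in cA'; case: cA' => Bc Kc.
exists c => // w Kw.
have hx : dotp (z - c) (z - c) <= dotp (z - x) (z - x) by apply: cmin; rewrite inE.
have [Bw|nBw] := pselect (Box w).
  by apply: cmin; rewrite inE.
have : ~ (dotp (z - w) (z - w) < r * r) by move=> /inBox.
move/negP; rewrite -leNgt => h.
apply: (le_trans hx); apply: le_trans h; rewrite /r; nra.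
Qed.

Lemma dotp_sub_scale {R : realType} {n : nat} (u v : 'rV[R]_n) t :
  dotp (u - t *: v) (u - t *: v) = dotp u u - 2 * t * dotp u v + t * t * dotp v v.
Proof. rewrite !dotpBl !dotpBr !dotpZl !dotpZr (dotpC v u); ring. Qed.

Lemma var_ineq {R : realType} {n : nat} (K : set 'rV[R]_n) p z :
  convexR K -> K p ->
  (forall w, K w -> dotp (z - p) (z - p) <= dotp (z - w) (z - w)) ->
  forall w, K w -> dotp (z - p) (w - p) <= 0.
Proof.
move=> cvx Kp pmin w Kw; rewrite leNgt; apply/negP => hc.
set c := dotp (z - p) (w - p) in hc.
set D := dotp (w - p) (w - p).
have D0 : 0 <= D by apply: dotp_ge0.
set t := c / (D + c).
have Dc0 : 0 < D + c by lra.
have ht : t * (D + c) = c by rewrite /t divfK // gt_eqF.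
have t0 : 0 < t by rewrite /t divr_gt0.
have t1 : t <= 1 by rewrite /t ler_pdivrMr // mul1r; lra.
have := pmin _ (cvx _ _ Kw Kp t (ltW t0) t1).
have -> : z - (t *: w + (1 - t) *: p) = (z - p) - t *: (w - p).
  by apply/rowP => i; rewrite !mxE; ring.
rewrite dotp_sub_scale -/c -/D => h.
have h2 : 2 * c <= t * D by nra.
nra.
Qed.

Lemma approx_sep {R : realType} {n : nat} (K : set 'rV[R]_n) x :
  closed K -> convexR K -> K x -> ~ interior K x ->
  forall e : R, 0 < e -> exists g : 'rV[R]_n, `|g| = 1 /\ forall w, K w -> dotp g (w - x) <= e.
Proof.
move=> cK cvx Kx nint e e0.
set eps := e / (n%:R + 1).
have eps0 : 0 < eps by rewrite /eps divr_gt0 // ltr_wpDl.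
have [[z [bz nKz]]|nz] := pselect (exists z, ball x eps z /\ ~ K z); last first.
  exfalso; apply: nint; apply/nbhs_ballP; exists eps => // z bz.
  by apply: contrapT => nKz; apply: nz; exists z.
move: bz; rewrite -ball_normE /= => bz.
have [p Kp pmin] := @nearest R n K x z cK Kx.
have vi := @var_ineq R n K p z cvx Kp pmin.
set m := `|z - p|.
have m0 : 0 < m.
  rewrite /m normr_gt0 subr_eq0; apply/eqP => ezp; apply: nKz; by rewrite ezp.
exists (m^-1 *: (z - p)); split.
  by rewrite normrZ ger0_norm ?invr_ge0 ?ltW // mulVf // gt_eqF.
move=> w Kw.
have key : dotp (z - p) (w - x) <= n%:R * (m * `|z - x|).
  have -> : w - x = (w - p) - (z - p) + (z - x).
    by apply/rowP => i; rewrite !mxE; ring.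
  rewrite dotpDr dotpBr.
  have := vi w Kw; have := dotp_ge0 (z - p).
  have := ler_norm (dotp (z - p) (z - x)); have := dotp_bound (z - p) (z - x).
  rewrite -/m; lra.
rewrite dotpZl.
have nzx : n%:R * `|z - x| <= e.
  have hn : 0 <= n%:R :> R by [].
  have : `|z - x| <= eps by rewrite distrC ltW.
  rewrite /eps => h.
  have h1 : n%:R * `|z - x| <= n%:R * (e / (n%:R + 1)) by apply: ler_wpM2l.
  apply: (le_trans h1); rewrite mulrA ler_pdivrMr ?ltr_wpDl //; nra.
apply: le_trans nzx.
rewrite -(ler_pM2l m0) mulrA mulfV ?gt_eqF // mul1r.
apply: (le_trans key); rewrite mulrCA; lra.
Qed.

Lemma support_hyp {R : realType} {n : nat} (K : set 'rV[R]_n) x :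
  closed K -> convexR K -> K x -> ~ interior K x ->
  exists2 g : 'rV[R]_n, g != 0 & forall w, K w -> dotp g w <= dotp g x.
Proof.
move=> cK cvx Kx nint.
have hk : forall k : nat, exists g : 'rV[R]_n,
    `|g| = 1 /\ forall w, K w -> dotp g (w - x) <= k.+1%:R^-1.
  by move=> k; apply: (@approx_sep R n K x cK cvx Kx nint); rewrite invr_gt0.
have [G HG] := choice hk.
pose Sig := (fun g : 'rV[R]_n => `|g|) @^-1` [set y | y = 1].
have cSig : closed Sig.
  apply: preimage_closed; last exact: closed_eq.
  by move=> g _; exact: (@norm_continuous R _ g).
have cpSig : compact Sig.
  pose Bx := [set v : 'rV[R]_n | forall i, `[(-1 : R), 1]%classic (v ord0 i)].
  have cBx : compact Bx.
    by apply: (@rV_compact _ _ (fun i => `[(-1 : R), 1]%classic)) => i; exact: segment_compact.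
  apply: (subclosed_compact cSig cBx) => v /= nv i.
  rewrite /= in_itv /= -ler_norml -nv.
  exact: entry_le.
have FSig : (G @ \oo) Sig by exists 0%N => // k _; rewrite /Sig /=; case: (HG k).
have [gam [Sgam clg]] := cpSig _ _ FSig.
exists gam.
  apply/eqP => g0; move: Sgam; rewrite /Sig /= g0 normr0 => /eqP.
  by rewrite eq_sym oner_eq0.
move=> w Kw; rewrite -subr_le0 -dotpBr leNgt; apply/negP.
set v := w - x => hv.
set eta := dotp gam v in hv.
set M := n%:R * `|v| + 1.
have M0 : 0 < M by rewrite /M ltr_pwDr // mulr_ge0.
set del := eta / (2 * M).
have del0 : 0 < del by rewrite /del divr_gt0 // mulr_gt0.
have hdM : del * M = eta / 2.
  rewrite /del; field; rewrite gt_eqF //.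
have eta2 : 0 < eta / 2 by rewrite divr_gt0.
have [N hN] := @ltr_add_invr R 0 (eta / 2) eta2.
rewrite add0r in hN.
have FA : (G @ \oo) [set g | dotp g v <= eta / 2].
  exists N => // k /= Nk; have [_ h] := HG k; apply: le_trans (h w Kw) _.
  apply/ltW/(le_lt_trans _ hN).
  by rewrite lef_pV2 ?posrE // ler_nat ltnS.
have [g [Ag Bg]] := clg _ _ FA (nbhsx_ballx gam del del0).
move: Bg; rewrite -ball_normE /= => Bg.
have e1 : eta = dotp g v + dotp (gam - g) v by rewrite /eta dotpBl; ring.
have h1 := ler_norm (dotp (gam - g) v).
have h2 := dotp_bound (gam - g) v.
have hn : 0 <= n%:R :> R by [].
have hv0 : 0 <= `|v| by [].
have h3 : `|gam - g| * (n%:R * `|v|) <= del * (n%:R * `|v|).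
  by apply: ler_wpM2r; [exact: mulr_ge0 | exact: ltW].
have h4 : del * (n%:R * `|v|) < del * M by rewrite ltr_pM2l // /M ltrDl.
move: Ag; rewrite /= => Ag.
have h5 : n%:R * (`|gam - g| * `|v|) = `|gam - g| * (n%:R * `|v|) by ring.
lra.
Qed.

Theorem theorem3 (R : realType) (n : nat) (S : set 'rV[R]_n)
  (a : 'rV[R]_n) (b : R) (C : set 'rV[R]_n) (Gamma : set ('rV[R]_n * R)) :
  closed S ->
  a != 0 ->
  convexR C ->
  S_free S C ->
  C = [set x | forall p, Gamma p -> dotp p.1 x <= p.2] ->
  (forall p, Gamma p -> exists x, [/\ S x, C x, hyperplane a b x & exposes x p C]) ->
  maximal_S_free_wrt S (hyperplane a b) C.
Proof.
move=> cS a0 cvxC Sfree CE Hexp C' cC' cvxC' CC' SfH y [C'y Hy].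
split => //; apply: contrapT => nCy.
have [[p [Gp hp]]|np] := pselect (exists p, Gamma p /\ p.2 < dotp p.1 y); last first.
  apply: nCy; rewrite CE => p Gp; rewrite leNgt; apply/negP => h; apply: np.
  by exists p.
have [x [Sx Cx Hx [ex1 ex2]]] := Hexp p Gp.
have [intx|nintx] := pselect (interior C' x).
  have : (rel_interior (hyperplane a b) (C' `&` hyperplane a b) `&`
          (S `&` hyperplane a b)) x.
    split; last by split.
    move: intx; rewrite /interior /= => /nbhs_ballP [e e0 be].
    split; first by split => //; apply: CC'.
    split => //; exists e => // z Hz hz; split => //; apply: be.
    by rewrite -ball_normE /= distrC.
  by rewrite SfH.
have [g g0 hg] := @support_hyp R n C' x cC' cvxC' (CC' _ Cx) nintx.
have [mu mu0 [e1 e2]] := ex2 (g, dotp g x)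
  (fun w Cw => hg w (CC' _ Cw)) g0 erefl.
have := hg y C'y; rewrite /= in e1 e2; rewrite e2 e1 dotpZl.
rewrite ler_pM2l //; apply/negP; rewrite -ltNge.
exact: hp.
Qed.
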